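(* Let $F$ be a field of characteristic zero and let $A$ be an $F$-algebra isomorphic to a direct sum (not necessarily finite) of finite field extensions of $F$ (for instance, a direct sum of copies of $F$). Then the only Rota–Baxter operator of weight zero on $A$ is the zero operator.
   Context: A linear operator $R$ on $A$ is a Rota–Baxter operator of weight $0$ if $R(x)R(y)=R(R(x)y+xR(y))$ for all $x,y\in A$. *)

(* Defs.v *)
From HB Require Import structures.
From mathcomp Require Import all_boot all_order all_algebra all_field.
Set Implicit Arguments. Unset Strict Implicit. Unset Printing Implicit Defensive.
Import GRing.Theory.
Local Open Scope ring_scope.

(* The (external, possibly infinite) direct sum  ⊕_{i : I} L i  of a family of
   finite field extensions L i of F, as an F-algebra (non-unital in general):
   dependent functions with finite support, pointwise operations. *)
(* list membership (Prop-valued, no decidable equality needed on I) *)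
Fixpoint lin {I : Type} (i : I) (s : list I) : Prop :=
  match s with nil => False | cons j s' => j = i \/ lin i s' end.

Lemma lin_app {I : Type} (i : I) (s t : list I) : lin i s \/ lin i t -> lin i (s ++ t).
Proof. elim: s => [|j s IH] /=; first by case. by case=> [[->|H]|H]; auto. Qed.

Section DirectSum.
Variables (F : fieldType) (I : Type) (L : I -> fieldExtType F).

Definition finsupp (x : forall i, L i) : Prop :=
  exists s : list I, forall i, ~ lin i s -> x i = 0.

Record dsum := DSum { dval : forall i, L i; dsupp : finsupp dval }.

Lemma finsupp0 : finsupp (fun i => 0).
Proof. by exists nil. Qed.

Lemma finsuppD (x y : dsum) : finsupp (fun i => dval x i + dval y i).
Proof.
case: x y => [x [s Hs]] [y [t Ht]] /=; exists (s ++ t)%list => i Hi.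
rewrite Hs ?Ht ?addr0 // => H; apply: Hi; apply lin_app; auto.
Qed.

Lemma finsuppM (x y : dsum) : finsupp (fun i => dval x i * dval y i).
Proof.
case: x y => [x [s Hs]] [y [t Ht]] /=; exists s => i Hi.
by rewrite Hs // mul0r.
Qed.

Lemma finsuppZ (a : F) (x : dsum) : finsupp (fun i => a *: dval x i).
Proof.
case: x => [x [s Hs]] /=; exists s => i Hi.
by rewrite Hs // scaler0.
Qed.

Definition dzero : dsum := DSum finsupp0.
Definition dadd (x y : dsum) : dsum := DSum (finsuppD x y).
Definition dmul (x y : dsum) : dsum := DSum (finsuppM x y).
Definition dscale (a : F) (x : dsum) : dsum := DSum (finsuppZ a x).

Definition dlinear (R : dsum -> dsum) : Prop :=
  forall (a : F) (x y : dsum), R (dadd (dscale a x) y) = dadd (dscale a (R x)) (R y).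

Definition rota_baxter0 (R : dsum -> dsum) : Prop :=
  dlinear R /\
  forall x y : dsum, dmul (R x) (R y) = R (dadd (dmul (R x) y) (dmul x (R y))).

End DirectSum.

(* Main.v *)
Require Import Defs.
From HB Require Import structures.
From mathcomp Require Import all_boot all_order all_algebra all_field.
From Stdlib Require Import FunctionalExtensionality ProofIrrelevance Classical_Prop.
From mathcomp Require Import zify.
Set Implicit Arguments. Unset Strict Implicit.
Local Open Scope ring_scope.
Import GRing.Theory.

Section Aux.
Variables (F : fieldType) (I : Type) (L : I -> fieldExtType F).

Lemma dsum_ext (x y : dsum L) : (forall i, dval x i = dval y i) -> x = y.
Proof.
case: x y => [x hx] [y hy] /= H.
have E : x = y by apply: functional_extensionality_dep.
subst y; by rewrite (proof_irrelevance _ hx hy).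
Qed.

Lemma nz_const (K : fieldExtType F) (x : K) : x != 0 ->
  exists r : {poly F}, r.[0] != 0 /\ (map_poly (in_alg K) r).[x] = 0.
Proof.
move=> nx.
have [p mp rp] := alg_integral x.
have pn0 : p != 0 by apply: monic_neq0.
have [n] := ubnP (size p); elim: n p pn0 rp {mp} => // n IH p pn0 rp sp.
case: (eqVneq p.[0] 0) => [p0|p0]; last by exists p; split => //; exact/eqP.
have /factor_theorem [q Dq] : root p 0 by exact/eqP.
have qn0 : q != 0 by apply: contraNneq pn0 => q0; rewrite Dq q0 mul0r.
apply: (IH q qn0).
  move: rp; rewrite Dq rmorphM /= rootE hornerM rmorphB /= map_polyX map_polyC /=.
  rewrite !hornerE scale0r subr0 mulf_eq0 (negbTE nx) orbF => H; exact: H.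
move: sp; rewrite Dq size_Mmonic ?monicXsubC // size_XsubC addn2; lia.
Qed.


Definition evl (cs : seq F) (y : dsum L) : dsum L :=
  foldr (fun c acc => dadd (dscale c y) (dmul y acc)) (dzero L) cs.

Lemma evl_val cs y i :
  dval (evl cs y) i = dval y i * (map_poly (in_alg (L i)) (Poly cs)).[dval y i].
Proof.
elim: cs => [|c cs IH] /=; first by rewrite rmorph0 horner0 mulr0.
rewrite IH cons_poly_def rmorphD rmorphM /= map_polyX map_polyC /= !hornerE.
by rewrite mulrDr mulr_algr addrC [_ * dval y i]mulrC mulrA.
Qed.

Lemma RBidem (R : dsum L -> dsum L) (hR : rota_baxter0 R) z :
  (forall i, dval (R z) i * dval (R z) i = dval (R z) i) ->
  forall i, dval (R z) i = 0.
Proof.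
case: hR => hlin RB Hid.
have RD a b : R (dadd a b) = dadd (R a) (R b).
  have := hlin 1 a b; have -> : dscale 1 a = a by apply: dsum_ext => j /=; rewrite scale1r.
  by move=> ->; congr dadd; apply: dsum_ext => j /=; rewrite scale1r.
set e := R z.
pose v := dmul e z.
have Rw : R (dadd v v) = e.
  have := RB z z; rewrite -/e.
  have -> : dadd (dmul e z) (dmul z e) = dadd v v by apply: dsum_ext => j /=; rewrite mulrC.
  by move=> <-; apply: dsum_ext => j /=; rewrite Hid.
have R3 : e = dadd e (R v).
  rewrite -{2}Rw -RD.
  have := RB z (dadd v v); rewrite Rw.
  have -> : dmul e e = e by apply: dsum_ext => j /=; rewrite Hid.
  move=> ->; congr R; apply: dsum_ext => j /=.
  by rewrite mulrDr mulrA Hid [dval z j * _]mulrC.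
have Rv : forall j, dval (R v) j = 0.
  move=> j; have := f_equal (fun t => dval t j) R3 => /=.
  move=> H; apply: (addrI (dval e j)); rewrite addr0; exact: esym H.
move=> i; rewrite -Rw RD /= Rv addr0 //.
Qed.

End Aux.

Theorem corollary8 (F : fieldType) (I : Type) (L : I -> fieldExtType F)
  (charF0 : [pchar F] =i pred0)
  (R : dsum L -> dsum L) (hR : rota_baxter0 R) :
  forall x : dsum L, R x = dzero L.
Proof.
move=> x.
have hR' := hR; case: hR' => hlin RB.
have RD a b : R (dadd a b) = dadd (R a) (R b).
  have := hlin 1 a b; have -> : dscale 1 a = a by apply: dsum_ext => j /=; rewrite scale1r.
  by move=> ->; congr dadd; apply: dsum_ext => j /=; rewrite scale1r.
have R0 : R (dzero L) = dzero L.
  have E : dadd (dzero L) (dzero L) = dzero L by apply: dsum_ext => j /=; rewrite addr0.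
  apply: dsum_ext => j; have := f_equal (fun t => dval t j) (RD (dzero L) (dzero L)).
  rewrite E /= => H; apply: (addrI (dval (R (dzero L)) j)); rewrite addr0; exact: esym H.
have RZ c a : R (dscale c a) = dscale c (R a).
  have := hlin c a (dzero L); rewrite R0.
  have E b : dadd b (dzero L) = b by apply: dsum_ext => j /=; rewrite addr0.
  by rewrite !E.
pose S z := exists w, R w = z.
have Sevl cs y : S y -> S (evl cs y).
  move=> [w Hw]; elim: cs => [|c cs [u Hu]] /=; first by exists (dzero L).
  exists (dadd (dscale c w) (dadd (dmul (R w) u) (dmul w (R u)))).
  by rewrite RD RZ -RB Hu Hw.
set y := R x.
have [s Hs] := dsupp y.
have [G [G0 HG]] : exists G : {poly F}, G.[0] != 0 /\
    forall i, lin i s -> dval y i * (map_poly (in_alg (L i)) G).[dval y i] = 0.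
  elim: s {Hs} => [|j s [G [G0 HG]]]; first by exists 1; rewrite hornerE oner_eq0.
  have [r [r0 Hr]] : exists r : {poly F}, r.[0] != 0 /\
      dval y j * (map_poly (in_alg (L j)) r).[dval y j] = 0.
    case: (eqVneq (dval y j) 0) => [->|nz]; first by exists 1; rewrite mul0r hornerE oner_eq0.
    by have [r [r0 Hr]] := nz_const nz; exists r; rewrite Hr mulr0.
  exists (r * G); split; first by rewrite hornerM mulf_neq0.
  move=> i [<-|Hi]; rewrite rmorphM /= hornerM.
    by rewrite mulrA Hr mul0r.
  by rewrite mulrCA HG // mulr0.
have HG' i : dval y i * (map_poly (in_alg (L i)) G).[dval y i] = 0.
  case: (Classical_Prop.classic (lin i s)) => Hi; first exact: HG.
  by rewrite Hs // mul0r.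
have [c [cs DG]] : exists c cs, G = Poly (c :: cs).
  move: G0 HG'; rewrite -(polyseqK G); case: (polyseq G) => [|c cs].
    by rewrite /= horner0 eqxx.
  by exists c, cs.
have c0 : c != 0 by move: G0; rewrite DG /= horner_cons mulr0 add0r.
pose e := dscale (- c^-1) (evl cs y).
have Se : S e.
  have [w Hw] := Sevl cs y (ex_intro _ x erefl).
  by exists (dscale (- c^-1) w); rewrite RZ Hw.
have ey i : dval e i * dval y i = dval y i.
  have := HG' i; rewrite DG /= cons_poly_def rmorphD rmorphM /= map_polyX map_polyC /=.
  rewrite !hornerE /e /= evl_val.
  set h := (map_poly _ (Poly cs)).[_]; set yi := dval y i; move=> Hy.
  have k0 : (in_alg (L i) c) != 0 by rewrite fmorph_eq0.
  have Hy' : yi * h * yi = - (yi * in_alg (L i) c).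
    by apply/eqP; rewrite -subr_eq0 opprK -mulrA -mulrDr Hy.
  rewrite -mulr_algl -[(- c^-1)%:A]/(in_alg (L i) (-c^-1)) rmorphN fmorphV -mulrA Hy'.
  by rewrite mulrN mulNr opprK mulrCA mulVf // mulr1.
have ee i : dval e i * dval e i = dval e i.
  have De : dval e i = dval y i * ((- c^-1) *: (map_poly (in_alg (L i)) (Poly cs)).[dval y i]).
    by rewrite /e /= evl_val scalerAr.
  by rewrite {2}De mulrA ey De.
case: Se => z Hz.
have := RBidem hR (z:=z); rewrite Hz => /(_ ee) Ez.
apply: dsum_ext => i /=; rewrite -ey Ez mul0r //.
Qed.
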